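(* Let $n,k$ be positive integers with $n\geq k$ and $n> 3(n-k)$. Then for every $C\in\mathcal{K}_k(n)$, the diagram $\beta_{n,k}(C)$ lies in $\mathcal{K}_{k-1}(n-1)$.
   Context: A linear chord diagram of size $n$ is a partition of $\{1,2,\dots,2n\}$ into blocks of size two, called chords. For a chord $c=\{s_c,e_c\}$ with $s_c<e_c$, $s_c$ is its start point, $e_c$ its end point, and its length is $e_c-s_c$. $\mathcal{K}_k(n)$ is the set of all linear chord diagrams of size $n$ in which every chord has length at least $k$. Let $M_{n,k}=\{k+1,\dots,2n-k\}$, and for a diagram $C$ of size $n$ let $S_C$ be the set of chords of $C$ with neither endpoint in $M_{n,k}$. The map $\beta_{n,k}$ is defined on $C\in\mathcal{K}_k(n)$ as follows. Let $c$ be the chord whose end point is $2n-k+1$ (the position immediately after $M_{n,k}$). Repeatedly swap the start point of $c$ with the nearest start point to its right belonging to a chord of $S_C$ (the two chords exchange these start positions), until no start point of a chord of $S_C$ lies to the right of the start point of $c$. Then remove the chord $c$ and relabel the remaining $2n-2$ points $1,\dots,2n-2$ preserving order. The result is $\beta_{n,k}(C)$, a diagram of size $n-1$. *)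

(* Defs.v *)
From mathcomp Require Import all_boot.
Set Implicit Arguments. Unset Strict Implicit. Unset Printing Implicit Defensive.

(* A linear chord diagram of size n on the points 1..2n is encoded by its
   partner map p : nat -> nat (p i is the other endpoint of the chord
   containing i); values outside 1..2n are irrelevant. *)
Definition is_lcd (n : nat) (p : nat -> nat) : Prop :=
  forall i, 1 <= i <= 2 * n ->
    [/\ 1 <= p i <= 2 * n, p i != i & p (p i) = i].

Definition K (k n : nat) (p : nat -> nat) : Prop :=
  is_lcd n p /\ forall i, 1 <= i <= 2 * n -> i < p i -> k <= p i - i.

Definition inM (n k x : nat) : bool := (k < x) && (x <= 2 * n - k).

(* Chords are identified by their end points (swapping start points never
   moves end points).  The chord of C = p0 with end point e is in S_C iff
   neither of its endpoints lies in M_{n,k}. *)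
Definition inSC (n k : nat) (p0 : nat -> nat) (e : nat) : bool :=
  [&& p0 e < e, ~~ inM n k e & ~~ inM n k (p0 e)].

Definition swap_starts (p : nat -> nat) (e1 e2 : nat) : nat -> nat :=
  fun x =>
    if x == e1 then p e2
    else if x == e2 then p e1
    else if x == p e1 then e2
    else if x == p e2 then e1
    else p x.

(* The end point 2n-k+1 of the distinguished chord c. *)
Definition cend (n k : nat) : nat := (2 * n - k).+1.

(* One step of the swapping procedure, for the original diagram p0 and the
   current diagram p: let s be the current start point of c; if some start
   point q > s belongs to a chord of S_C, take the nearest one and swap. *)
Definition beta_step (n k : nat) (p0 p : nat -> nat) : nat -> nat :=
  let s := p (cend n k) in
  let cands := [seq q <- iota s.+1 (2 * n - s)
                 | (q < p q) && inSC n k p0 (p q)] in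
  match cands with
  | [::] => p
  | q :: _ => swap_starts p (cend n k) (p q)
  end.

(* Repeat until no more swap is possible (2n steps always suffice since the
   start of c strictly moves right at each effective step; once no swap is
   possible the step is the identity). *)
Definition beta_swapped (n k : nat) (p0 : nat -> nat) : nat -> nat :=
  iter (2 * n) (beta_step n k p0) p0.

Definition relab (a b x : nat) : nat := x - (a < x) - (b < x).
Definition unrelab (a b y : nat) : nat :=
  let y1 := if a <= y then y.+1 else y in
  if b <= y1 then y1.+1 else y1.

Definition beta (n k : nat) (p0 : nat -> nat) : nat -> nat :=
  let pf := beta_swapped n k p0 in
  let b := cend n k in
  let a := pf b in
  fun y => relab a b (pf (unrelab a b y)).

(* Main.v *)
Require Import Defs.
From mathcomp Require Import all_boot zify.

Definition Inv (n k : nat) (p0 p : nat -> nat) : Prop :=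
 [/\ is_lcd n p,
  (forall i, 1 <= i <= 2*n -> (i < p i) = (i < p0 i)),
  (forall e, 1 <= e <= 2*n -> p0 e < e -> ~~ inSC n k p0 e -> p e = p0 e),
  (forall e, 1 <= e <= 2*n -> inSC n k p0 e -> p e <= k) &
  (forall e, 1 <= e <= 2*n -> e != cend n k -> p e < e ->
     k <= e - p e /\ (p e < p (cend n k) -> cend n k < e -> k < e - p e))].

Lemma filter_iota_head (P : pred nat) a m q r :
  [seq x <- iota a m | P x] = q :: r ->
  [/\ P q, a <= q, q < a + m & forall x, a <= x -> x < q -> ~~ P x].
Proof.
elim: m a => [|m IH] a //=.
case: ifP => Pa.
- move=> [<- _]; split => //; try lia.
- move=> /IH [Pq aq qm H]; split => //; try lia.
  move=> x ax xq; case: (eqVneq x a) => [->|xa]; first by rewrite Pa.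
  apply: H; lia.
Qed.

Lemma step_inv n k p0 p :
  0 < k -> k <= n -> 2 * (n - k) < k -> is_lcd n p0 ->
  inSC n k p0 (cend n k) -> Inv n k p0 p -> Inv n k p0 (beta_step n k p0 p).
Proof.
move=> k0 kn km L0 scb [LA LB LC LD LE].
rewrite /beta_step.
set b := cend n k.
have bdef : b = (2 * n - k).+1 by [].
have b2 : 1 <= b <= 2 * n by lia.
have [s2 sb ps] := LA b b2.
have sk : p b <= k by apply: LD.
move Es: (p b) => s in s2 sb ps sk *.
case E: [seq _ <- _ | _] => [|q r]; first by split.
have [/andP [qpq scq] sq qlt minq] := @filter_iota_head _ _ _ _ _ E.
have q2 : 1 <= q <= 2 * n by lia.
have [e2 eq pe] := LA q q2.
have qk : q <= k by rewrite -pe; apply: LD.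
move Ee: (p q) => e' in e2 eq pe qk scq qpq *.
have eb : e' != b by apply/eqP => H; move: pe; rewrite H Es; lia.
have [Eq1 _] := LE e' e2 eb ltac:(by rewrite pe).
rewrite pe in Eq1.
have be : b < e'.
  move: scq; rewrite /inSC /inM => /and3P [_ H _]; move: H; lia.
have slb : s < b by lia.
have se : s < e' by lia.
have qb : q < b by lia.
set p' := swap_starts p b e'.
have Vb : p' b = q by rewrite /p' /swap_starts eqxx pe.
have Ve : p' e' = s by rewrite /p' /swap_starts eqxx gtn_eqF.
have Vs : p' s = e'.
  by rewrite /p' /swap_starts Es pe (ltn_eqF slb) (ltn_eqF se) eqxx.
have Vq : p' q = b.
  by rewrite /p' /swap_starts Es pe (ltn_eqF qb) (ltn_eqF qpq) (gtn_eqF sq) eqxx.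
have Vo : forall x, x != b -> x != e' -> x != s -> x != q -> p' x = p x.
  move=> x h1 h2 h3 h4; rewrite /p' /swap_starts Es pe.
  by rewrite (negbTE h1) (negbTE h2) (negbTE h3) (negbTE h4).
have Blt : forall x, (x < p' x) = (x < p x).
  move=> x.
  case: (eqVneq x b) => [->|h1]; first by rewrite Vb Es; lia.
  case: (eqVneq x e') => [->|h2]; first by rewrite Ve pe; lia.
  case: (eqVneq x s) => [->|h3]; first by rewrite Vs ps; lia.
  case: (eqVneq x q) => [->|h4]; first by rewrite Vq; lia.
  by rewrite Vo.
split.
- move=> x x2.
  case: (eqVneq x b) => [->|h1]; first by rewrite Vb Vq; split => //; lia.
  case: (eqVneq x e') => [->|h2]; first by rewrite Ve Vs; split => //; lia.
  case: (eqVneq x s) => [->|h3]; first by rewrite Vs Ve; split => //; lia.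
  case: (eqVneq x q) => [->|h4]; first by rewrite Vq Vb; split => //; lia.
  have [px2 pxx ppx] := LA x x2.
  rewrite Vo // Vo //.
  + apply/eqP => H; move: ppx; rewrite H Es; move/eqP: h3; lia.
  + apply/eqP => H; move: ppx; rewrite H pe; move/eqP: h4; lia.
  + apply/eqP => H; move: ppx; rewrite H ps; move/eqP: h1; lia.
  + apply/eqP => H; move: ppx; rewrite H Ee; move/eqP: h2; lia.
- by move=> i i2; rewrite Blt LB.
- move=> x x2 px nsc.
  have h1 : x != b by apply/eqP => H; move: nsc; rewrite H scb.
  have h2 : x != e' by apply/eqP => H; move: nsc; rewrite H scq.
  have h3 : x != s.
    apply/eqP => H; have := LB s s2; rewrite ps; move: px; rewrite H; lia.
  have h4 : x != q.
    apply/eqP => H; have := LB q q2; move: px; rewrite H; lia.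
  by rewrite Vo // LC.
- move=> x x2 sc.
  case: (eqVneq x b) => [->|h1]; first by rewrite Vb.
  case: (eqVneq x e') => [->|h2]; first by rewrite Ve.
  have h3 : x != s.
    apply/eqP => H; have := LB s s2; rewrite ps; move: sc; rewrite H /inSC => /andP[? _]; lia.
  have h4 : x != q.
    apply/eqP => H; have := LB q q2; move: sc; rewrite H /inSC => /andP[? _]; lia.
  by rewrite Vo // LD.
- move=> x x2 xb.
  case: (eqVneq x e') => [->|h2]; first by rewrite Ve Vb => _; split; lia.
  case: (eqVneq x s) => [->|h3]; first by rewrite Vs; lia.
  case: (eqVneq x q) => [->|h4]; first by rewrite Vq; lia.
  rewrite Vo // Vb => pxx.
  have [px2 pxn ppx] := LA x x2.
  have [O1 O2] := LE x x2 xb pxx.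
  split => // pq bx.
  case: (ltnP (p x) s) => [pxs|sp]; first by apply: O2 => //; rewrite Es.
  case: (eqVneq (p x) s) => [pxs2|pxs2].
    by move: ppx; rewrite pxs2 ps => H; move: xb; rewrite -H /b eqxx.
  have := minq (p x) ltac:(lia) pq; rewrite ppx pxx /=.
  have p0x : p0 x < x.
    have := LB x x2; have [_ h _] := L0 x x2; move: h pxx; lia.
    case: (boolP (inSC n k p0 x)) => [//|nsc].
  have := LC x x2 p0x nsc => H; move: nsc; rewrite /inSC /inM -H.
  lia.
Qed.
Lemma relabE a b x : relab a b x = x - (a < x) - (b < x).
Proof. by []. Qed.
Lemma relab_mono a b x z : a < b -> x != a -> x != b -> z != a -> z != b -> x < z ->
  relab a b x < relab a b z.
Proof.
move=> ab /eqP xa /eqP xb /eqP za /eqP zb xz; rewrite !relabE.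
case: (ltnP a x); case: (ltnP b x); case: (ltnP a z); case: (ltnP b z) => /=; lia.
Qed.
Lemma relab_len a b x z k : a < b -> x != a -> x != b -> z != a -> z != b -> x < z ->
  k <= z - x -> (x < a -> b < z -> k < z - x) -> k.-1 <= relab a b z - relab a b x.
Proof.
move=> ab /eqP xa /eqP xb /eqP za /eqP zb xz h1 h2; rewrite !relabE.
case: (ltnP a x); case: (ltnP b x); case: (ltnP a z) => h3; case: (ltnP b z) => h4 /=; try lia.
Qed.
Lemma relab_range a b x n : 0 < a -> a < b -> b <= 2 * n -> x != a -> x != b -> 1 <= x <= 2 * n ->
  1 <= relab a b x <= 2 * n.-1.
Proof.
move=> a0 ab bn /eqP xa /eqP xb x2; rewrite !relabE.
case: (ltnP a x); case: (ltnP b x) => /=; lia.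
Qed.
Lemma unrelab_cases a b y : a < b ->
  (y < a /\ unrelab a b y = y) \/ (a <= y /\ y.+1 < b /\ unrelab a b y = y.+1)
  \/ (a <= y /\ b <= y.+1 /\ unrelab a b y = y.+2).
Proof.
move=> ab; rewrite /unrelab.
case: (leqP a y) => h1 /=.
- case: (leqP b y.+1) => h2; [right; right | right; left]; lia.
- rewrite leqNgt (ltn_trans h1 ab) /=; left; lia.
Qed.
Lemma unrelabP a b y : a < b ->
  [/\ unrelab a b y != a, unrelab a b y != b, relab a b (unrelab a b y) = y &
      y <= unrelab a b y <= y.+2].
Proof.
move=> ab; rewrite relabE; have := unrelab_cases a b y ab.
by case=> [[h1 ->]|[[h1 [h2 ->]]|[h1 [h2 ->]]]]; split; lia.
Qed.
Lemma relabK a b x : a < b -> x != a -> x != b -> unrelab a b (relab a b x) = x.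
Proof.
move=> ab xa xb; rewrite relabE; have := unrelab_cases a b (x - (a < x) - (b < x)) ab.
case=> [[h1 ->]|[[h1 [h2 ->]]|[h1 [h2 ->]]]]; lia.
Qed.

Lemma final_K n k p0 pf : 0 < k -> k <= n -> 2 * (n - k) < k ->
  inSC n k p0 (cend n k) -> Inv n k p0 pf ->
  K k.-1 n.-1 (fun y => relab (pf (cend n k)) (cend n k)
                 (pf (unrelab (pf (cend n k)) (cend n k) y))).
Proof.
move=> k0 kn km scb [LA LB LC LD LE].
set b := cend n k.
have bdef : b = (2 * n - k).+1 by [].
have b2 : 1 <= b <= 2 * n by lia.
have [a2 ab0 pa] := LA b b2.
have ak : pf b <= k by apply: LD.
move Ea: (pf b) => a in a2 ab0 pa ak *.
have ab : a < b by lia.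
have Hp : forall x, 1 <= x <= 2 * n -> x != a -> x != b ->
    [/\ 1 <= pf x <= 2 * n, pf x != a & pf x != b].
  move=> x x2 xa xb; have [px2 _ ppx] := LA x x2; split => //.
  - by apply/eqP => H; move: ppx; rewrite H pa => H2; move: xb; rewrite H2 eqxx.
  - by apply/eqP => H; move: ppx; rewrite H Ea => H2; move: xa; rewrite H2 eqxx.
have Hy : forall y, 1 <= y <= 2 * n.-1 ->
    [/\ 1 <= unrelab a b y <= 2 * n, unrelab a b y != a, unrelab a b y != b &
        relab a b (unrelab a b y) = y].
  move=> y y2; have [h1 h2 h3 h4] := unrelabP a b y ab; split => //; lia.
have a0 : 0 < a by case/andP: a2.
have bn : b <= 2 * n by case/andP: b2.
split.
- move=> y y2.
  have [x2 xa xb rx] := Hy y y2.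
  move: (unrelab a b y) x2 xa xb rx => x x2 xa xb rx.
  have [px2 pxa pxb] := Hp x x2 xa xb.
  have [_ pxx ppx] := LA x x2.
  split.
  + exact: relab_range.
  + rewrite -rx; case: (ltngtP x (pf x)) => h.
    * by rewrite gtn_eqF // relab_mono.
    * by rewrite ltn_eqF // relab_mono.
    * by move: pxx; rewrite -h eqxx.
  + by rewrite relabK // ppx.
- move=> y y2.
  have [x2 xa xb rx] := Hy y y2.
  move: (unrelab a b y) x2 xa xb rx => x x2 xa xb rx.
  have [px2 pxa pxb] := Hp x x2 xa xb.
  have [_ pxx ppx] := LA x x2.
  rewrite -rx => lt.
  have xpx : x < pf x.
    case: (ltngtP x (pf x)) => // h.
    - by have := relab_mono a b _ _ ab pxa pxb xa xb h; rewrite ltnNge ltnW.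
    - by move: pxx; rewrite -h eqxx.
  have [O1 O2] := LE (pf x) px2 pxb ltac:(by rewrite ppx).
  move: O1 O2; rewrite ppx Ea => O1 O2.
  exact: relab_len.
Qed.

Lemma init_inv n k p0 : 0 < k -> k <= n -> 2 * (n - k) < k -> K k n p0 ->
  inSC n k p0 (cend n k) /\ Inv n k p0 p0.
Proof.
move=> k0 kn km [L0 KL].
have bdef : cend n k = (2 * n - k).+1 by [].
have b2 : 1 <= cend n k <= 2 * n by lia.
have [pb2 pbb ppb] := L0 _ b2.
have pbl : p0 (cend n k) < cend n k.
  case: (ltnP (p0 (cend n k)) (cend n k)) => // h.
  have := KL _ b2; move/eqP: pbb; lia.
have Kb : k <= cend n k - p0 (cend n k) by have := KL _ pb2; rewrite ppb; apply.
have scb : inSC n k p0 (cend n k).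
  rewrite /inSC /inM pbl /=; lia.
split => //; split => //.
- move=> e e2 /and3P [pe _ h]; have [pe2 _ ppe] := L0 e e2.
  have := KL _ pe2; rewrite ppe => H; have := H pe; move: h; rewrite /inM; lia.
- move=> e e2 eb pe; have [pe2 _ ppe] := L0 e e2.
  have := KL _ pe2; rewrite ppe => H; have := H pe => H2; split => // h1 h2.
  move/eqP: eb; lia.
Qed.

Lemma iter_inv n k p0 m : 0 < k -> k <= n -> 2 * (n - k) < k -> K k n p0 ->
  Inv n k p0 (iter m (beta_step n k p0) p0).
Proof.
move=> k0 kn km KK; have [scb I0] := init_inv n k p0 k0 kn km KK.
elim: m => [|m IH] //=.
by apply: step_inv => //; case: KK.
Qed.

Theorem lemma5 (n k : nat) (p : nat -> nat) :
  0 < n -> 0 < k -> k <= n -> 3 * (n - k) < n ->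
  K k n p -> K k.-1 n.-1 (beta n k p).
Proof.
move=> n0 k0 kn h3 KK.
have km : 2 * (n - k) < k by lia.
have [scb _] := init_inv n k p k0 kn km KK.
exact: (final_K n k p (beta_swapped n k p) k0 kn km scb (iter_inv n k p (2 * n) k0 kn km KK)).
Qed.
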